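(* Let $m$ and $n$ be relatively prime positive integers. Then $S(A_m \otimes A_n) = S(A_{mn})$, where $\otimes$ denotes the Kronecker product of matrices.
   Context: For a positive integer $k$, let $\Phi_d$ denote the $d$th cyclotomic polynomial and let $\Psi_k : \mathbf{Z}[X]/(X^k-1) \to \bigoplus_{d \mid k} \mathbf{Z}[X]/(\Phi_d(X))$ be the natural map $f \bmod (X^k-1) \mapsto \bigoplus_{d\mid k} f \bmod \Phi_d(X)$. Endow $\mathbf{Z}[X]/(X^k-1)$ with the basis $(1, \overline{X}, \dots, \overline{X}^{k-1})$, each $\mathbf{Z}[X]/(\Phi_d(X))$ with the basis $(1, \overline{X}, \dots, \overline{X}^{\phi(d)-1})$, and order the summands of the direct sum by increasing $d$. $A_k$ is the $k\times k$ integer matrix of $\Psi_k$ with respect to these bases (the $j$th column is the coordinate vector of $\Psi_k(\overline{X}^{j})$). For an integer matrix $A$, $S(A)$ denotes its Smith normal form, with all elementary divisors taken non-negative. *)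

(* Defs.v *)
From HB Require Import structures.
From mathcomp Require Import all_boot all_order all_algebra all_field.
From mathcomp Require Import mxtens.
From Stdlib Require Import ClassicalEpsilon.
Set Implicit Arguments. Unset Strict Implicit. Unset Printing Implicit Defensive.
Import Order.TTheory GRing.Theory Num.Theory.
Local Open Scope ring_scope.

(* Row r of A_k corresponds to the coefficient of X^i in Z[X]/(Phi_d). *)
Definition row_labels (k : nat) : seq (nat * nat) :=
  flatten [seq [seq (d, i) | i <- iota 0 (totient d)] | d <- divisors k].

(* A_k: the matrix of Psi_k; column j is the coordinate vector of Psi_k(X^j),
   i.e. the coefficients of X^j mod Phi_d (reduction mod the monic 'Phi_d). *)
Definition Amat (k : nat) : 'M[int]_k :=
  \matrix_(r < k, j < k)
    let: (d, i) := nth (0%N, 0%N) (row_labels k) r in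
    (('X^j %% 'Phi_d) : {poly int})`_i.

Definition is_SNF (n : nat) (A D : 'M[int]_n) : Prop :=
  [/\ is_diag_mx D,
      (forall i : 'I_n, 0 <= D i i),
      (forall i j : 'I_n, (i <= j)%N -> (D i i %| D j j)%Z) &
      exists L R : 'M[int]_n,
        [/\ L \in unitmx, R \in unitmx & L *m A *m R = D]].

Definition SNF (n : nat) (A : 'M[int]_n) : 'M[int]_n :=
  epsilon (inhabits 0) (is_SNF A).

(* Main.v *)
Require Import Defs.
From HB Require Import structures.
From mathcomp Require Import all_boot all_order all_algebra all_field.
From mathcomp Require Import mxtens.
From mathcomp Require Import cyclic.
From mathcomp Require Import fingroup perm.
From Stdlib Require Import FunctionalExtensionality PropExtensionality ClassicalEpsilon.
Set Implicit Arguments. Unset Strict Implicit. Unset Printing Implicit Defensive.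
Import Order.TTheory GRing.Theory Num.Theory.
Local Open Scope ring_scope.

Notation pZ := (map_poly (intr : int -> algC)).

Lemma key_zero D (eta : algC) (q : {poly int}) : D.-primitive_root eta ->
  (size q <= totient D)%N -> (pZ q).[eta] = 0 -> q = 0.
Proof.
move=> prim sq q0.
have [p [Dp _] dvP] := minCpolyP eta.
have EQ : map_poly ratr (map_poly (intr : int -> rat) q) = pZ q.
  by rewrite -map_poly_comp; apply: eq_map_poly => b /=; rewrite rmorph_int.
have : (p %| map_poly (intr : int -> rat) q)%R by rewrite -dvP EQ /root q0.
have szp : size p = (totient D).+1.
  rewrite -(size_map_inj_poly (@fmorph_inj _ _ (ratr : {rmorphism rat -> algC}))) ?rmorph0 //.
  by rewrite -Dp (minCpoly_cyclotomic prim) size_cyclotomic.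
move=> dv; case: (eqVneq q 0) => // qn0; exfalso.
have qQn0 : map_poly (intr : int -> rat) q != 0 by rewrite map_poly_eq0_id0 ?intr_eq0 ?lead_coef_eq0.
move: (dvdp_leq qQn0 dv).
rewrite szp size_map_inj_poly //; last exact: intr_inj.
by rewrite ltnNge sq.
Qed.


Lemma eval_mod (P p : {poly int}) (x : algC) : P \is monic -> (pZ P).[x] = 0 ->
  (pZ (p %% P)).[x] = (pZ p).[x].
Proof.
move=> mP Px.
by rewrite {2}(Pdiv.IdomainMonic.divp_eq mP p) rmorphD rmorphM /= hornerD hornerM Px mulr0 add0r.
Qed.

Lemma eval_wide n (p : {poly int}) (x : algC) : (size p <= n)%N ->
  (pZ p).[x] = \sum_(i < n) (p`_i)%:~R * x ^+ i.
Proof.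
move=> sp; have sp' : (size (pZ p) <= n)%N.
  by rewrite size_map_inj_poly ?rmorph0 //; exact: intr_inj.
rewrite (horner_coef_wide _ sp').
by apply: eq_bigr => i _; rewrite coef_map.
Qed.

Lemma Phi_root (D : nat) (x : algC) : D.-primitive_root x -> (pZ 'Phi_D).[x] = 0.
Proof. by move=> pr; rewrite (Cintr_Cyclotomic pr); apply/eqP; rewrite -/(root _ _) root_cyclotomic. Qed.

Lemma size_modPhi (D : nat) (p : {poly int}) : (size (p %% 'Phi_D)%R <= totient D)%N.
Proof. by rewrite -ltnS -(size_Cyclotomic D) ltn_modpN0 // monic_neq0 // Cyclotomic_monic. Qed.

Lemma sum_size k I (r : seq I) (P : pred I) (F : I -> {poly int}) :
  (forall i, P i -> size (F i) <= k)%N -> (size (\sum_(i <- r | P i) F i)%R <= k)%N.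
Proof.
move=> H; apply: (big_ind (fun p : {poly int} => size p <= k)%N).
- by rewrite size_poly0.
- by move=> p q sp sq; rewrite (leq_trans (size_polyD _ _)) // geq_max sp sq.
- exact: H.
Qed.

Lemma prim_pow D d e (eta : algC) a : D = (d * e)%N -> D.-primitive_root eta ->
  (a %% e = 0)%N -> coprime a d -> d.-primitive_root (eta ^+ a).
Proof.
move=> DE pr ae co.
have ea : (e %| a)%N by rewrite /dvdn ae.
have Dpos := prim_order_gt0 pr.
have dpos : (0 < d)%N by move: Dpos; rewrite DE muln_gt0 => /andP[].
have epos : (0 < e)%N by move: Dpos; rewrite DE muln_gt0 => /andP[].
rewrite -(divnK ea) mulnC exprM.
have pe : d.-primitive_root (eta ^+ e).
  subst D; have := dvdn_prim_root pr (dvdn_mulr e (dvdnn d)); by rewrite mulKn.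
rewrite prim_root_exp_coprime //.
by move: co; rewrite {1}(divn_eq a e) ae addn0 coprimeMl => /andP[].
Qed.


Lemma ab_facts d e : coprime d e ->
  [/\ (chinese d e 1 0 %% e = 0)%N, coprime (chinese d e 1 0) d,
      (chinese d e 0 1 %% d = 0)%N, coprime (chinese d e 0 1) e &
      forall t, ((chinese d e 1 0 + chinese d e 0 1) * t = t %[mod d * e])%N].
Proof.
move=> co; split.
- by rewrite (chinese_modr co) mod0n.
- by rewrite -coprime_modl (chinese_modl co) coprime_modl coprime1n.
- by rewrite (chinese_modl co) mod0n.
- by rewrite -coprime_modl (chinese_modr co) coprime_modl coprime1n.
move=> t.
have h : (chinese d e 1 0 + chinese d e 0 1 == 1 %[mod d * e])%N.
  rewrite (chinese_remainder co); apply/andP; split; apply/eqP.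
    by rewrite -modnDm (chinese_modl co) (chinese_modl co) modnDm addn0.
  by rewrite -modnDm (chinese_modr co) (chinese_modr co) modnDm.
by rewrite -modnMml (eqP h) modnMml mul1n.
Qed.

Lemma block_id d e t : (0 < d)%N -> (0 < e)%N -> coprime d e ->
  \sum_(i < totient d) \sum_(j < totient e)
     ((('X^t %% 'Phi_d)`_i * ('X^t %% 'Phi_e)`_j) *:
        ('X^(chinese d e 1 0 * i + chinese d e 0 1 * j) %% 'Phi_(d * e)))
  = 'X^t %% 'Phi_(d * e).
Proof.
move=> dp ep co.
have [ae coa bd cob abt] := ab_facts co.
set a := chinese d e 1 0 in ae coa abt *; set b := chinese d e 0 1 in bd cob abt *.
have Dp : (0 < d * e)%N by rewrite muln_gt0 dp.
have [eta pr] := C_prim_root_exists Dp.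
have prz : d.-primitive_root (eta ^+ a) by apply: (prim_pow (erefl _) pr).
have prw : e.-primitive_root (eta ^+ b).
  by apply: (prim_pow (_ : (d * e = e * d)%N) pr) => //; rewrite mulnC.
have monP k : 'Phi_k \is monic by apply: Cyclotomic_monic.
apply/eqP; rewrite -subr_eq0; apply/eqP; apply: (key_zero pr).
  rewrite (leq_trans (size_polyD _ _)) // geq_max size_polyN size_modPhi andbT.
  apply: sum_size => i _; apply: sum_size => j _.
  by rewrite (leq_trans (size_scale_leq _ _)) // size_modPhi.
rewrite rmorphB /= hornerD hornerN; apply/eqP; rewrite subr_eq0; apply/eqP.
rewrite (eval_mod _ (monP _) (Phi_root pr)) map_polyXn hornerXn.
rewrite rmorph_sum horner_sum.
have ev (k : nat) (x : algC) : k.-primitive_root x ->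
    \sum_(i < totient k) (('X^t %% 'Phi_k)`_i)%:~R * x ^+ i = x ^+ t.
  move=> px; rewrite -eval_wide ?size_modPhi //.
  by rewrite (eval_mod _ (monP _) (Phi_root px)) map_polyXn hornerXn.
transitivity ((\sum_(i < totient d) (('X^t %% 'Phi_d)`_i)%:~R * (eta ^+ a) ^+ i) *
              (\sum_(j < totient e) (('X^t %% 'Phi_e)`_j)%:~R * (eta ^+ b) ^+ j)).
  rewrite mulr_suml; apply: eq_bigr => i _.
  rewrite rmorph_sum horner_sum mulr_sumr; apply: eq_bigr => j _.
  rewrite /= map_polyZ hornerZ (eval_mod _ (monP _) (Phi_root pr)) map_polyXn hornerXn.
  by rewrite rmorphM /= exprD !exprM mulrACA.
rewrite (ev _ _ prz) (ev _ _ prw) -!exprM -exprD -mulnDl.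
by rewrite -(prim_expr_mod pr) abt (prim_expr_mod pr).
Qed.


Lemma sum_totient_divisors k : (0 < k)%N -> (\sum_(d <- divisors k) totient d)%N = k.
Proof.
move=> kp; rewrite -{2}(sum_totient_dvd k) -(big_mkord (fun d => d %| k)%N) -[in RHS]big_filter.
apply: perm_big; apply: uniq_perm; first exact: divisors_uniq.
  by rewrite filter_uniq // iota_uniq.
move=> d; rewrite mem_filter mem_iota -dvdn_divisors // add0n ltnS.
by case dk: (d %| k)%N => //=; rewrite (dvdn_leq kp dk).
Qed.

Lemma size_rl k : (0 < k)%N -> size (row_labels k) = k.
Proof.
move=> kp; rewrite /row_labels size_allpairs_dep sumnE big_map -{2}(sum_totient_divisors kp).
by apply: eq_bigr => d _; rewrite size_iota.
Qed.

Lemma uniq_rl k : uniq (row_labels k).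
Proof.
apply: allpairs_uniq_dep; first exact: divisors_uniq.
  by move=> d _; exact: iota_uniq.
by move=> [x1 y1] [x2 y2] _ _ /= [e1 e2]; subst.
Qed.

Lemma mem_rl k x : x \in row_labels k -> (x.1 \in divisors k) && (x.2 < totient x.1)%N.
Proof.
by case/allpairsPdep => d [i [dk]]; rewrite mem_iota add0n => /andP[_ ilt] -> /=; rewrite dk.
Qed.

Lemma sum_rl k (F : nat * nat -> int) : (0 < k)%N ->
  \sum_(r < k) F (nth (0%N, 0%N) (row_labels k) r) =
  \sum_(d <- divisors k) \sum_(i < totient d) F (d, nat_of_ord i).
Proof.
move=> kp; transitivity (\sum_(x <- row_labels k) F x).
  by rewrite (big_nth (0%N, 0%N)) size_rl // big_mkord.
rewrite /row_labels big_flatten big_map /=; apply: eq_bigr => d _.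
by rewrite big_map -(big_mkord xpredT (fun i => F (d, i))) /index_iota subn0.
Qed.


Lemma sum_if_seq (r : seq nat) x0 (F : nat -> int) : x0 \in r -> uniq r ->
  \sum_(x <- r) (if x == x0 then F x else 0) = F x0.
Proof. by move=> xr ur; rewrite (bigD1_seq x0) //= eqxx big1 ?addr0 // => x /negbTE ->. Qed.

Lemma gcd_split m n D : coprime m n -> (D %| m * n)%N -> D = (gcdn D m * gcdn D n)%N.
Proof.
move=> co Dmn; apply/eqP; rewrite eqn_dvd; apply/andP; split.
  by rewrite muln_gcdl !muln_gcdr !dvdn_gcd Dmn !(dvdn_mulr _ (dvdnn D)) (dvdn_mull _ (dvdnn D)).
rewrite Gauss_dvd ?dvdn_gcdl //.
apply: (coprime_dvdl (dvdn_gcdr _ _)); apply: (coprime_dvdr (dvdn_gcdr _ _)) co.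
Qed.

Lemma de_iff m n D d e : (0 < m)%N -> (0 < n)%N -> coprime m n ->
  (D %| m * n)%N -> (d %| m)%N -> (e %| n)%N ->
  (D == d * e)%N = (d == gcdn D m) && (e == gcdn D n).
Proof.
move=> mp np co Dmn dm en; apply/eqP/andP; last first.
  by case=> /eqP -> /eqP ->; apply: gcd_split.
  move=> ->; split; apply/eqP.
    have co' : coprime m e by exact: coprime_dvdr en co.
    by rewrite gcdnC (Gauss_gcdl _ co') (gcdn_idPr dm).
  have co' : coprime n d by rewrite coprime_sym; exact: coprime_dvdl dm co.
  by rewrite gcdnC (Gauss_gcdr _ co') (gcdn_idPr en).
Qed.

Lemma collapse m n D (G : nat -> nat -> int) : (0 < m)%N -> (0 < n)%N -> coprime m n ->
  (D %| m * n)%N ->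
  \sum_(d <- divisors m) \sum_(e <- divisors n) (if D == (d * e)%N then G d e else 0)
  = G (gcdn D m) (gcdn D n).
Proof.
move=> mp np co Dmn.
transitivity (\sum_(d <- divisors m) (if d == gcdn D m then
   \sum_(e <- divisors n) (if e == gcdn D n then G d e else 0) else 0)).
  apply: eq_big_seq => d; rewrite -dvdn_divisors // => dm.
  case: eqP => [dE|dne].
    apply: eq_big_seq => e; rewrite -dvdn_divisors // => en.
    by rewrite (de_iff mp np co Dmn dm en) dE eqxx.
  apply: big1_seq => e; rewrite -dvdn_divisors // => en.
  by rewrite (de_iff mp np co Dmn dm en); move/eqP/negbTE: dne => ->.
rewrite sum_if_seq ?divisors_uniq -?dvdn_divisors ?dvdn_gcdr //.
by rewrite sum_if_seq ?divisors_uniq -?dvdn_divisors ?dvdn_gcdr.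
Qed.

Lemma sum_tens m n (F : 'I_m -> 'I_n -> int) :
  \sum_(s < m * n) F (mxtens_unindex s).1 (mxtens_unindex s).2 =
  \sum_(i < m) \sum_(j < n) F i j.
Proof.
rewrite pair_big /=; symmetry; apply: (reindex (@mxtens_unindex m n)).
by exists (@mxtens_index m n) => s _; rewrite (mxtens_indexK, mxtens_unindexK).
Qed.

Definition lab k (r : nat) := nth (0%N, 0%N) (row_labels k) r.

Lemma AmatE k r j : Amat k r j = ('X^j %% 'Phi_(lab k r).1)`_(lab k r).2.
Proof. by rewrite mxE /lab; case: (nth _ _ _). Qed.

Lemma lab_mem k (r : 'I_k) : ((lab k r).1 \in divisors k) && ((lab k r).2 < totient (lab k r).1)%N.
Proof.
apply: mem_rl; apply: mem_nth; case: k r => [[]//|k] r; by rewrite size_rl.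
Qed.

Lemma modX m d t : (0 < m)%N -> (d %| m)%N -> 'X^(t %% m) %% 'Phi_d = 'X^t %% 'Phi_d :> {poly int}.
Proof.
move=> mp dm; have dp : (0 < d)%N by apply: dvdn_gt0 dm.
have [eta pr] := C_prim_root_exists dp.
apply/eqP; rewrite -subr_eq0; apply/eqP; apply: (key_zero pr).
  by rewrite (leq_trans (size_polyD _ _)) // geq_max size_polyN !size_modPhi.
rewrite rmorphB /= hornerD hornerN !(eval_mod _ (Cyclotomic_monic _) (Phi_root pr)).
rewrite !map_polyXn !hornerXn -(prim_expr_mod pr) (modn_dvdm _ dm) (prim_expr_mod pr).
by rewrite subrr.
Qed.

Section Main.
Variables m n : nat.
Hypotheses (mp : (0 < m)%N) (np : (0 < n)%N) (co : coprime m n).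

Definition Lm : 'M[int]_(m * n) := \matrix_(r, s)
  (let D := (lab (m * n) r).1 in let k := (lab (m * n) r).2 in
   let x := lab m (@mxtens_unindex m n s).1 in let y := lab n (@mxtens_unindex m n s).2 in
   if D == (x.1 * y.1)%N then
     ('X^(chinese x.1 y.1 1 0 * x.2 + chinese x.1 y.1 0 1 * y.2) %% 'Phi_D)`_k else 0).

Lemma L_sum (r : 'I_(m * n)) (W : nat * nat -> nat * nat -> int) :
  let D := (lab (m * n) r).1 in let k := (lab (m * n) r).2 in
  let d0 := gcdn D m in let e0 := gcdn D n in
  \sum_s Lm r s * W (lab m (@mxtens_unindex m n s).1) (lab n (@mxtens_unindex m n s).2) =
  \sum_(i < totient d0) \sum_(j < totient e0)
     ('X^(chinese d0 e0 1 0 * i + chinese d0 e0 0 1 * j) %% 'Phi_D)`_k * W (d0, nat_of_ord i) (e0, nat_of_ord j).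
Proof.
move=> D k d0 e0.
pose H (x y : nat * nat) := (if D == (x.1 * y.1)%N then
     ('X^(chinese x.1 y.1 1 0 * x.2 + chinese x.1 y.1 0 1 * y.2) %% 'Phi_D)`_k else 0) * W x y.
transitivity (\sum_(s1 < m) \sum_(s2 < n) H (lab m s1) (lab n s2)).
  by rewrite -(sum_tens (fun s1 s2 => H (lab m s1) (lab n s2))); apply: eq_bigr => s _; rewrite mxE.
transitivity (\sum_(s1 < m) \sum_(e <- divisors n) \sum_(j < totient e) H (lab m s1) (e, nat_of_ord j)).
  by apply: eq_bigr => s1 _; rewrite (sum_rl (fun y => H (lab m s1) y)).
rewrite (sum_rl (fun x => \sum_(e <- divisors n) \sum_(j < totient e) H x (e, nat_of_ord j))) //.
transitivity (\sum_(d <- divisors m) \sum_(e <- divisors n) (if D == (d * e)%N then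
   \sum_(i < totient d) \sum_(j < totient e)
     ('X^(chinese d e 1 0 * i + chinese d e 0 1 * j) %% 'Phi_D)`_k * W (d, nat_of_ord i) (e, nat_of_ord j)
   else 0)).
  apply: eq_bigr => d _; rewrite exchange_big; apply: eq_bigr => e _.
  rewrite /H /=; case: ifP => _ //.
  by rewrite big1 // => i _; rewrite big1 // => j _; rewrite mul0r.
apply: (collapse (fun d e => \sum_(i < totient d) \sum_(j < totient e)
     ('X^(chinese d e 1 0 * i + chinese d e 0 1 * j) %% 'Phi_D)`_k * W (d, nat_of_ord i) (e, nat_of_ord j))) => //.
by have := lab_mem r; rewrite -dvdn_divisors ?muln_gt0 ?mp // => /andP[].
Qed.

Lemma labN_facts (r : 'I_(m * n)) :
  let D := (lab (m * n) r).1 in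
  [/\ D = (gcdn D m * gcdn D n)%N, (0 < gcdn D m)%N, (0 < gcdn D n)%N &
      coprime (gcdn D m) (gcdn D n)].
Proof.
move=> D.
have Dmn : (D %| m * n)%N.
  by have := lab_mem r; rewrite -dvdn_divisors ?muln_gt0 ?mp // => /andP[].
split; first exact: gcd_split.
- by rewrite gcdn_gt0 mp orbT.
- by rewrite gcdn_gt0 np orbT.
apply: (coprime_dvdl (dvdn_gcdr _ _)); apply: (coprime_dvdr (dvdn_gcdr _ _)) co.
Qed.

Lemma L_block (r : 'I_(m * n)) t :
  let D := (lab (m * n) r).1 in let k := (lab (m * n) r).2 in
  let d0 := gcdn D m in let e0 := gcdn D n in
  \sum_(i < totient d0) \sum_(j < totient e0)
     ('X^(chinese d0 e0 1 0 * i + chinese d0 e0 0 1 * j) %% 'Phi_D)`_k *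
       (('X^t %% 'Phi_d0)`_i * ('X^t %% 'Phi_e0)`_j) = ('X^t %% 'Phi_D)`_k.
Proof.
move=> D k d0 e0; have [DE d0p e0p co0] := labN_facts r.
rewrite -/D -/d0 -/e0 in DE d0p e0p co0 *.
have := congr1 (fun p : {poly int} => p`_k) (block_id t d0p e0p co0).
rewrite -DE => <-; rewrite coef_sum; apply: eq_bigr => i _.
rewrite coef_sum; apply: eq_bigr => j _; by rewrite coefZ mulrC.
Qed.

Definition Mm : 'M[int]_(m * n) := \matrix_(s, r)
  (let D' := (lab (m * n) r).1 in let k' := (lab (m * n) r).2 in
   let x := lab m (@mxtens_unindex m n s).1 in let y := lab n (@mxtens_unindex m n s).2 in
   if D' == (x.1 * y.1)%N then ('X^k' %% 'Phi_x.1)`_x.2 * ('X^k' %% 'Phi_y.1)`_y.2 else 0).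

Lemma LM1 : Lm *m Mm = 1%:M.
Proof.
apply/matrixP => r r'; rewrite !mxE.
pose W (x y : nat * nat) := if (lab (m * n) r').1 == (x.1 * y.1)%N then
   ('X^((lab (m * n) r').2) %% 'Phi_x.1)`_x.2 * ('X^((lab (m * n) r').2) %% 'Phi_y.1)`_y.2 else 0.
transitivity (\sum_s Lm r s * W (lab m (@mxtens_unindex m n s).1) (lab n (@mxtens_unindex m n s).2)).
  by apply: eq_bigr => s _; rewrite [Mm _ _]mxE.
rewrite L_sum /W /=.
have [DE _ _ _] := labN_facts r.
set D := (lab (m * n) r).1 in DE *; set d0 := gcdn D m in DE *; set e0 := gcdn D n in DE *.
have Hr : (r == r') = (lab (m * n) r == lab (m * n) r').
  rewrite /lab nth_uniq ?size_rl ?muln_gt0 ?mp ?uniq_rl //.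
have Er : lab (m * n) r = (D, (lab (m * n) r).2) by rewrite /D; case: (lab _ _).
have k'lt := lab_mem r'.
rewrite Hr Er; case: (lab (m * n) r') k'lt => D' k' /= /andP[_ k'lt]; rewrite -DE xpair_eqE.
case: (eqVneq D' D) => [eD|ne]; last first.
  rewrite big1 // => i _; rewrite big1 // => j _; rewrite ?mulr0 //.
subst D'; rewrite /=.
rewrite (L_block r k') -/D modp_small ?coefXn //.
by rewrite size_polyXn size_Cyclotomic ltnS.
Qed.

Definition sigf (t : 'I_(m * n)) : 'I_(m * n) :=
  mxtens_index (Ordinal (ltn_pmod t mp), Ordinal (ltn_pmod t np)).

Lemma sigf_inj : injective sigf.
Proof.
move=> t1 t2 /(congr1 (@mxtens_unindex m n)); rewrite !mxtens_indexK => [[e1 e2]].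
apply: val_inj => /=; have : (t1 == t2 %[mod m * n])%N.
  by rewrite (chinese_remainder co) e1 e2 !eqxx.
by rewrite !modn_small // => /eqP.
Qed.

Definition sigp := perm sigf_inj.

Lemma LB : Lm *m col_perm sigp (Amat m *t Amat n) = Amat (m * n).
Proof.
apply/matrixP => r t; rewrite !mxE.
pose W (x y : nat * nat) := ('X^t %% 'Phi_x.1)`_x.2 * ('X^t %% 'Phi_y.1)`_y.2.
transitivity (\sum_s Lm r s * W (lab m (@mxtens_unindex m n s).1) (lab n (@mxtens_unindex m n s).2)).
  apply: eq_bigr => s _; congr (_ * _); rewrite mxE permE /sigf mxE mxtens_indexK /= !AmatE.
  have /andP[dm _] := lab_mem (@mxtens_unindex m n s).1.
  have /andP[en _] := lab_mem (@mxtens_unindex m n s).2.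
  rewrite -dvdn_divisors // in dm; rewrite -dvdn_divisors // in en.
  by rewrite /W (modX _ mp dm) (modX _ np en).
by rewrite L_sum /W /= (L_block r t) /lab; case: (nth (0%N, 0%N) (row_labels (m * n)) r).
Qed.

End Main.

Lemma equiv_SNF k (A B L P : 'M[int]_k) : L \in unitmx -> P \in unitmx ->
  L *m B *m P = A -> SNF B = SNF A.
Proof.
move=> uL uP E; rewrite /SNF; congr (epsilon _ _).
apply: functional_extensionality => D; apply: propositional_extensionality.
split; case=> h1 h2 h3 [L' [R' [uL' uR' E']]]; split => //.
  exists (L' *m invmx L), (invmx P *m R'); split.
  - by rewrite unitmx_mul uL' unitmx_inv uL.
  - by rewrite unitmx_mul uR' unitmx_inv uP.
  rewrite -E !mulmxA -(mulmxA L' (invmx L) L) mulVmx // mulmx1.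
  by rewrite -(mulmxA _ P (invmx P)) mulmxV // mulmx1.
  Show.
exists (L' *m L), (P *m R'); split.
- by rewrite unitmx_mul uL' uL.
- by rewrite unitmx_mul uP uR'.
by rewrite -E' -E !mulmxA.
Qed.

Theorem theorem2p4 (m n : nat) :
  (0 < m)%N -> (0 < n)%N -> coprime m n ->
  SNF (Amat m *t Amat n) = SNF (Amat (m * n)).
Proof.
move=> mp np co.
have [uL _] := mulmx1_unit (LM1 mp np co).
have := @equiv_SNF (m * n) (Amat (m * n)) (Amat m *t Amat n) _ _ uL (@unitmx_perm _ _ ((sigp mp np co)^-1)%g).
apply.
by rewrite -mulmxA -col_permE LB.
Qed.
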